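(* In the setting below, suppose $p,q\geq5$. Then for all distinct $i,j,k\in\mathbb Z/N\mathbb Z$ we have $P_{ij}\cap Q_{jk}=\emptyset$.
   Context: Setting: $p,q$ distinct primes, $N=p+q$; $M=(m_{ik})_{i,k\in\mathbb Z/N\mathbb Z}$ has entries in $\mathbb Z/pq\mathbb Z$ and $(e^{2\pi i\,m_{ik}/pq})$ is a complex Hadamard matrix (unimodular entries, orthogonal rows). $L_i(k)=m_{ik}$, $L_{ij}=L_j-L_i$. For $d\mid pq$, $d(\mathbb Z/pq\mathbb Z)$ is the subgroup of multiples of $d$. For distinct $i,j$ there is a partition $\mathbb Z/N\mathbb Z=P_{ij}\sqcup Q_{ij}\sqcup R_{ij}$ and $r\in\mathbb Z/pq\mathbb Z$ with: $\#R_{ij}=2$ and $L_{ij}\equiv r$ on $R_{ij}$; $\#P_{ij}=p-1$ and $L_{ij}(P_{ij})=(r+q(\mathbb Z/pq\mathbb Z))\setminus\{r\}$; $\#Q_{ij}=q-1$ and $L_{ij}(Q_{ij})=(r+p(\mathbb Z/pq\mathbb Z))\setminus\{r\}$. This partition is unique ($R_{ij}$ is the pair of indices where $L_{ij}$ takes its unique repeated value). Put $P^+_{ij}=P_{ij}\cup R_{ij}$, $Q^+_{ij}=Q_{ij}\cup R_{ij}$. *)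

(* Defs.v *)
From HB Require Import structures.
From mathcomp Require Import all_boot all_order all_algebra.
From mathcomp Require Import algC.
Set Implicit Arguments. Unset Strict Implicit. Unset Printing Implicit Defensive.
Import Order.TTheory GRing.Theory Num.Theory.
Local Open Scope ring_scope.

Definition multiples (n d : nat) : {set 'Z_n} := [set y *+ d | y : 'Z_n].

(* Complex Hadamard condition for the matrix (z^(m_ik)), z a primitive
   (p q)-th root of unity: entries unimodular automatically; rows orthogonal
   w.r.t. the Hermitian inner product. *)
Definition hadamard_exp (N n : nat) (z : algC) (M : 'M['Z_n]_N) : Prop :=
  forall i j : 'I_N, i != j ->
    \sum_(k < N) z ^+ (val (M i k)) * (z ^+ (val (M j k)))^* = 0.

Definition Ldiff (N n : nat) (M : 'M['Z_n]_N) (i j : 'I_N) (k : 'I_N) : 'Z_n :=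
  M j k - M i k.

Definition is_PQR (p q : nat) (M : 'M['Z_(p * q)]_(p + q)) (i j : 'I_(p + q))
    (P Q R : {set 'I_(p + q)}) (r : 'Z_(p * q)) : Prop :=
  [/\ [/\ [disjoint P & Q], [disjoint P & R] & [disjoint Q & R]],
      P :|: Q :|: R = [set: 'I_(p + q)],
      (#|R| = 2%N /\ (forall k, k \in R -> Ldiff M i j k = r)),
      (#|P| = p.-1 /\ Ldiff M i j @: P = [set r + x | x in multiples (p * q) q] :\ r) &
      (#|Q| = q.-1 /\ Ldiff M i j @: Q = [set r + x | x in multiples (p * q) p] :\ r)].

(* Main.v *)
Require Import Defs.
From HB Require Import structures.
From mathcomp Require Import all_boot all_order all_algebra.
From mathcomp Require Import algC cyclotomic zify.
Import Order.TTheory GRing.Theory Num.Theory.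
Lemma sum1_ind (m : nat) (f : 'I_m -> nat) : \sum_i f i = 1 ->
  exists i, forall j, f j = (j == i).
Proof.
move=> hs.
have [i fi] : exists i, 0 < f i.
  case: (pickP (fun i => 0 < f i)) => [i fi | H]; first by exists i.
  suff : \sum_i f i = 0 by rewrite hs.
  by apply: big1 => i _; have := H i; rewrite lt0n => /negbFE /eqP.
exists i => j.
move: hs; rewrite (bigD1 i) //=.
set s := bigop _ _ _ => hs.
have h0 : s = 0 by lia.
have fi1 : f i = 1 by lia.
case: eqP => [->//|/eqP ji].
move/eqP: h0; rewrite sum_nat_eq0 => /forallP /(_ j); rewrite ji /=.
by move/eqP.
Qed.

Lemma debruijn (p q : nat) (pp : prime p) (pq : prime q) (neq : p != q)
  (c : 'I_p -> 'I_q -> nat)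
  (hrect : forall u u' v v', c u v + c u' v' = c u v' + c u' v)
  (hsum : \sum_u \sum_v c u v = p + q) :
  exists u2 v2, forall u v, c u v = (u == u2) + (v == v2).
Proof.
have p2 := prime_gt1 pp; have q2 := prime_gt1 pq.
have p3 : (3 <= p) || (3 <= q) by move: neq p2 q2; clear; lia.
pose u0 : 'I_p := Ordinal (ltnW p2).
pose v0 : 'I_q := Ordinal (ltnW q2).
case: (@arg_minnP _ v0 predT (fun v => c u0 v) isT) => v1 _ hv1.
have m1 : forall u v, c u v1 <= c u v.
  move=> u v; have := hrect u u0 v1 v; have := hv1 v isT; lia.
case: (@arg_minnP _ u0 predT (fun u => c u v1) isT) => u1 _ hu1.
have m2 : forall u v, c u1 v <= c u v.
  move=> u v; have := hrect u1 u v1 v; have := hu1 u isT; lia.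
set g := c u1 v1.
pose al u := c u v1 - g.
pose be v := c u1 v - g.
have dec : forall u v, c u v = al u + be v + g.
  move=> u v; have := hrect u u1 v v1; have := m1 u1 v; have := m2 u v1.
  rewrite /al /be /g; lia.
have hs2 : q * (\sum_u al u) + p * (\sum_v be v) + p * q * g = p + q.
  rewrite -hsum.
  under [RHS]eq_bigr do under eq_bigr do rewrite dec.
  under [RHS]eq_bigr do rewrite !big_split /= sum_nat_const card_ord.
  rewrite !big_split /= sum_nat_const card_ord.
  rewrite -big_distrr /=.
  under [X in _ = _ + X]eq_bigr do rewrite sum_nat_const card_ord.
  rewrite sum_nat_const card_ord; nia.
set A := \sum_u al u in hs2; set B := \sum_v be v in hs2.
have g0 : g = 0.
  case: (posnP g) => // gp; exfalso.
  have : p * q <= p + q by nia.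
  case/orP: p3 => ?; nia.
have ndv : forall a b, prime a -> prime b -> a != b -> ~~ (a %| b).
  by move=> a b pa pb ab; rewrite dvdn_prime2.
have A1 : A = 1.
  case: (ltngtP A 1) => // hA.
    have A0 : A = 0 by lia.
    rewrite A0 g0 in hs2.
    have : p %| q.
      by rewrite -(dvdn_addr _ (dvdnn p)) -hs2 /= !muln0 add0n addn0 dvdn_mulr.
    by rewrite (negbTE (ndv _ _ pp pq neq)).
  have B0 : B = 0 by nia.
  rewrite B0 g0 in hs2.
  have : q %| p.
    have -> : p = q * (A - 1) by nia.
    exact: dvdn_mulr.
  have nq : q != p by rewrite eq_sym.
  by rewrite (negbTE (ndv _ _ pq pp nq)).
have B1 : B = 1 by rewrite A1 g0 in hs2; nia.
have [u2 hu2] := @sum1_ind _ _ A1.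
have [v2 hv2] := @sum1_ind _ _ B1.
exists u2, v2 => u v; by rewrite dec hu2 hv2 g0 addn0.
Qed.
Local Open Scope ring_scope.
Lemma root_conj (n : nat) (z : algC) : n.-primitive_root z -> z * z^* = 1.
Proof.
move=> hz; have n0 := prim_order_gt0 hz.
have h1 : `|z| = 1.
  apply/eqP; rewrite -(pexpr_eq1 n0) // -normrX (prim_expr_order hz).
  by rewrite normr1.
by rewrite -normCK h1 expr1n.
Qed.

Lemma sum_cop {n : nat} {z : algC} (hz : n.-primitive_root z) {I : finType}
  {e : I -> nat} : \sum_(x : I) z ^+ e x = 0 ->
  forall t, coprime t n -> \sum_(x : I) (z ^+ t) ^+ e x = 0.
Proof.
move=> hs t ht.
pose P : {poly rat} := \sum_(x : I) 'X^(e x).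
have [pz [Dpz _] Hpz] := minCpolyP z.
have rP : root (map_poly ratr P) z.
  rewrite /root /P rmorph_sum horner_sum.
  under eq_bigr do rewrite rmorphXn /= map_polyX hornerXn.
  by rewrite hs.
rewrite Hpz in rP.
have rt : root (minCpoly z) (z ^+ t).
  by rewrite (minCpoly_cyclotomic hz) (root_cyclotomic hz) prim_root_exp_coprime.
rewrite Dpz in rt.
have dv : map_poly ratr pz %| map_poly (ratr : rat -> algC) P by rewrite dvdp_map.
have := root_dvdp dv rt.
rewrite /root /P rmorph_sum horner_sum.
under eq_bigr do rewrite rmorphXn /= map_polyX hornerXn.
by move/eqP.
Qed.

Lemma geo_sum (n : nat) (w : algC) : w ^+ n = 1 -> w != 1 ->
  \sum_(t < n) w ^+ t = 0.
Proof.
move=> wn w1; have := subrX1 w n; rewrite wn subrr => /esym/eqP.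
by rewrite mulf_eq0 subr_eq0 (negbTE w1) /= => /eqP.
Qed.

Lemma mod_mulp (p q a b s : nat) : a = b %[mod q] ->
  a * (p * s) = b * (p * s) %[mod p * q].
Proof.
move=> ab; rewrite (mulnC p s) !mulnA (mulnC p q) -!muln_modl.
by rewrite -modnMml ab modnMml.
Qed.

Lemma ratio_sum {n : nat} {z : algC} (hz : n.-primitive_root z) {a b : nat} :
  (a < n)%N -> (b < n)%N ->
  \sum_(t < n) (z ^+ a / z ^+ b) ^+ t = ((a == b) * n)%:R.
Proof.
move=> an bn; have n0 := prim_order_gt0 hz.
have z0 : z ^+ b != 0 by rewrite expf_neq0 // (prim_root_eq0 hz) -lt0n.
case: eqP => [->|ab].
  rewrite divff // mul1n.
  under eq_bigr do rewrite expr1n.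
  by rewrite sumr_const card_ord.
rewrite mul0n; apply: geo_sum.
  by rewrite expr_div_n -!exprM mulnC exprM (prim_expr_order hz) mulnC exprM
    (prim_expr_order hz) !expr1n divr1.
apply/negP => /eqP h.
have /eqP : z ^+ a = z ^+ b by rewrite -(divfK z0 (z ^+ a)) h mul1r.
by rewrite (eq_prim_root_expr hz) !modn_small // => /eqP.
Qed.

Lemma card_sum (I : finType) (P : pred I) :
  #|[set x | P x]| = (\sum_(x : I) (P x : nat))%N.
Proof. by rewrite cardsE -sum1_card big_mkcond. Qed.

Lemma rect (p q : nat) (pp : prime p) (pq : prime q) (neq : p != q)
  (z : algC) (hz : (p * q).-primitive_root z) (I : finType) (e : I -> nat)
  (he : forall x, (e x < p * q)%N) (hs : \sum_x z ^+ e x = 0)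
  (e1 e2 e3 e4 : nat) :
  (e1 < p * q)%N -> (e2 < p * q)%N -> (e3 < p * q)%N -> (e4 < p * q)%N ->
  e1 = e2 %[mod p] -> e3 = e4 %[mod p] -> e1 = e3 %[mod q] -> e2 = e4 %[mod q] ->
  (#|[set x | e x == e1]| + #|[set x | e x == e4]| =
   #|[set x | e x == e2]| + #|[set x | e x == e3]|)%N.
Proof.
move=> l1 l2 l3 l4 h12 h34 h13 h24.
set n := (p * q)%N.
have n0 : (0 < n)%N by rewrite muln_gt0 !prime_gt0.
have Gc : forall y, (y < n)%N ->
    \sum_(t < n) \sum_x (z ^+ e x / z ^+ y) ^+ t = (#|[set x | e x == y]| * n)%:R.
  move=> y yn; rewrite exchange_big /=.
  under eq_bigr do rewrite (ratio_sum hz (he _) yn).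
  by rewrite -natr_sum -big_distrl /= card_sum.
pose S t := \sum_x (z ^+ t) ^+ e x.
have Pt : forall y t, \sum_x (z ^+ e x / z ^+ y) ^+ t = S t * ((z ^+ y) ^+ t)^-1.
  move=> y t; rewrite /S mulr_suml; apply: eq_bigr => x _.
  by rewrite expr_div_n -!exprM mulnC.
have key : ((#|[set x | e x == e1]| * n)%:R + (#|[set x | e x == e4]| * n)%:R
   = (#|[set x | e x == e2]| * n)%:R + (#|[set x | e x == e3]| * n)%:R :> algC).
  rewrite -!Gc // -!big_split /=; apply: eq_bigr => t _; rewrite !Pt.
  have [cop|ncop] := boolP (coprime t n).
    by rewrite /S (sum_cop hz hs _ cop) !mul0r !addr0.
  have Ep : forall a b, (a = b %[mod q])%N -> (p %| t)%N ->
      (z ^+ a) ^+ t = (z ^+ b) ^+ t.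
    move=> a b ab /dvdnP [s ->]; rewrite -!exprM; apply/eqP.
    by rewrite (eq_prim_root_expr hz) (mulnC s p); apply/eqP; apply: mod_mulp.
  have Eq : forall a b, (a = b %[mod p])%N -> (q %| t)%N ->
      (z ^+ a) ^+ t = (z ^+ b) ^+ t.
    move=> a b ab /dvdnP [s ->]; rewrite -!exprM; apply/eqP.
    by rewrite (eq_prim_root_expr hz) (mulnC s q) /n (mulnC p q); apply/eqP; apply: mod_mulp.
  move: ncop; rewrite /n coprimeMr !(coprime_sym t) !prime_coprime //.
  case/nandP => /negbNE dt.
    by rewrite (Ep _ _ h13 dt) (Ep _ _ h24 dt) addrC.
  by rewrite (Eq _ _ h12 dt) (Eq _ _ h34 dt).
move/eqP: key; rewrite -!natrD eqr_nat -!mulnDl eqn_pmul2r // => /eqP.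
by [].
Qed.
Lemma sum_only {T : finType} (a : T) (F : T -> nat) :
  (forall u, u != a -> F u = 0%N) -> (\sum_u F u = F a)%N.
Proof. by move=> H; rewrite (bigD1 a) //= big1 ?addn0. Qed.

Lemma cop_pq {p q : nat} : prime p -> prime q -> p != q -> coprime p q.
Proof. by move=> pp pq neq; rewrite prime_coprime // dvdn_prime2. Qed.

Definition crt (p q u v : nat) := (chinese p q u v %% (p * q))%N.

Lemma crt_p (p q u v : nat) : coprime p q -> (u < p)%N -> (crt p q u v %% p = u)%N.
Proof.
move=> cpq up; rewrite /crt modn_dvdm ?dvdn_mulr // chinese_modl //.
by rewrite modn_small.
Qed.

Lemma crt_q (p q u v : nat) : coprime p q -> (v < q)%N -> (crt p q u v %% q = v)%N.
Proof.
move=> cpq vq; rewrite /crt modn_dvdm ?dvdn_mull // chinese_modr //.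
by rewrite modn_small.
Qed.

Lemma crt_lt (p q u v : nat) : (0 < p * q)%N -> (crt p q u v < p * q)%N.
Proof. by move=> h; rewrite /crt ltn_mod. Qed.

Lemma crt_uniq {p q a b : nat} : coprime p q -> (a < p * q)%N -> (b < p * q)%N ->
  (a %% p = b %% p)%N -> (a %% q = b %% q)%N -> a = b.
Proof.
move=> cpq ha hb h1 h2.
have : (a == b %[mod p * q])%N by rewrite chinese_remainder // h1 h2 !eqxx.
by rewrite !modn_small // => /eqP.
Qed.

Lemma cross (p q : nat) (pp : prime p) (pq : prime q) (neq : p != q)
  (z : algC) (hz : (p * q).-primitive_root z) (I : finType) (e : I -> nat)
  (he : forall x, (e x < p * q)%N) (hs : \sum_x z ^+ e x = 0)
  (hI : #|I| = (p + q)%N) :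
  exists u2 v2 : nat,
    [/\ forall x, (e x %% p = u2)%N \/ (e x %% q = v2)%N,
        forall x x', (e x %% p = e x' %% p)%N -> (e x %% p != u2)%N -> x = x' &
        forall x x', (e x %% q = e x' %% q)%N -> (e x %% q != v2)%N -> x = x'].
Proof.
have cpq := cop_pq pp pq neq.
have p0 := prime_gt0 pp; have q0 := prime_gt0 pq.
have n0 : (0 < p * q)%N by rewrite muln_gt0 p0.
pose c (u : 'I_p) (v : 'I_q) := #|[set x | e x == crt p q u v]|.
have hrect : forall u u' v v', (c u v + c u' v' = c u v' + c u' v)%N.
  move=> u u' v v'; apply: (@rect p q pp pq neq z hz I e he hs); rewrite ?crt_lt //.
  - by rewrite !crt_p.
  - by rewrite !crt_p.
  - by rewrite !crt_q.
  - by rewrite !crt_q.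
pose rp x : 'I_p := Ordinal (ltn_pmod (e x) p0).
pose rq x : 'I_q := Ordinal (ltn_pmod (e x) q0).
have ecrt : forall x (u : 'I_p) (v : 'I_q), (e x == crt p q u v) = (u == rp x :> 'I_p) && (v == rq x :> 'I_q).
  move=> x u v; apply/eqP/andP => [H|[/eqP -> /eqP ->]].
    by split; rewrite -val_eqE /= H ?crt_p ?crt_q.
  apply: (crt_uniq cpq (he x) (crt_lt _ _ _ _ n0)).
    by rewrite crt_p.
  by rewrite crt_q.
have hsum : (\sum_u \sum_v c u v = p + q)%N.
  rewrite -hI -sum1_card.
  under eq_bigr do under eq_bigr do rewrite /c card_sum.
  under eq_bigr do rewrite exchange_big /=.
  rewrite exchange_big /=; apply: eq_bigr => x _.
  rewrite (sum_only (rp x)); last first.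
    by move=> u /negbTE nu; apply: big1 => v _; rewrite ecrt nu.
  rewrite (sum_only (rq x)) ?ecrt ?eqxx //.
  by move=> v /negbTE nv; rewrite ecrt nv andbF.
have [u2 [v2 hc]] := @debruijn p q pp pq neq c hrect hsum.
have ii : forall x, rp x = u2 \/ rq x = v2.
  move=> x; have : (0 < c (rp x) (rq x))%N.
    by apply/card_gt0P; exists x; rewrite inE ecrt !eqxx.
  by rewrite hc; case: eqP; case: eqP; auto.
exists u2, v2; split.
- by move=> x; case: (ii x) => [<-|<-]; [left|right].
- move=> x x' hpx hu.
  have rpe : rp x = rp x' by apply: val_inj.
  have ne : rp x != u2 by apply: contra hu => /eqP <-.
  have hqx : rq x = v2 by case: (ii x) => // h; rewrite h eqxx in ne.
  have hqx' : rq x' = v2 by case: (ii x') => // h; rewrite rpe h eqxx in ne.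
  have c1 : c (rp x) v2 = 1%N by rewrite hc (negbTE ne) eqxx.
  move/eqP/cards1P: c1 => [y /setP hy].
  have := hy x; have := hy x'; rewrite !inE !ecrt hqx hqx' rpe !eqxx /=.
  by move=> /esym/eqP -> /esym/eqP ->.
- move=> x x' hqx hv.
  have rqe : rq x = rq x' by apply: val_inj.
  have ne : rq x != v2 by apply: contra hv => /eqP <-.
  have hpx : rp x = u2 by case: (ii x) => // h; rewrite h eqxx in ne.
  have hpx' : rp x' = u2 by case: (ii x') => // h; rewrite rqe h eqxx in ne.
  have c1 : c u2 (rq x) = 1%N by rewrite hc (negbTE ne) eqxx.
  move/eqP/cards1P: c1 => [y /setP hy].
  have := hy x; have := hy x'; rewrite !inE !ecrt hpx hpx' rqe !eqxx /=.
  by move=> /esym/eqP -> /esym/eqP ->.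
Qed.

Lemma Lval {n : nat} (hn : (1 < n)%N) (a : 'Z_n) : (a < n)%N.
Proof. by have := ltn_ord a; rewrite [X in (_ < X)%N -> _]Zp_cast. Qed.

Lemma Ladd {n : nat} (hn : (1 < n)%N) (a b : 'Z_n) :
  nat_of_ord (a + b) = ((a + b) %% n)%N.
Proof. by rewrite /= [X in (_ %% X)%N = _]Zp_cast. Qed.

Lemma Lmuln {n : nat} (hn : (1 < n)%N) (a : 'Z_n) (m : nat) :
  nat_of_ord (a *+ m) = ((a * m) %% n)%N.
Proof. by rewrite Zp_mulrn /= [X in (_ %% X)%N = _]Zp_cast. Qed.

Lemma card_mult (n a d : nat) : n = (a * d)%N -> (1 < n)%N ->
  (a <= #|multiples n d|)%N.
Proof.
move=> nad hn.
pose phi (k : 'I_a) : 'Z_n := (k%:R : 'Z_n) *+ d.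
have phiv : forall k : 'I_a, nat_of_ord (phi k) = (k * d)%N.
  move=> k; rewrite /phi -mulrnA val_Zp_nat // modn_small //.
  by rewrite nad ltn_mul2r ltn_ord andbT; case: (d) nad hn => [|//]; rewrite muln0 => ->.
have inj : injective phi.
  move=> k k' /(congr1 (@nat_of_ord _)); rewrite !phiv => /eqP; rewrite eqn_mul2r.
  case/orP => [/eqP d0|/eqP/val_inj //].
  by move: hn; rewrite nad d0 muln0.
rewrite -(card_ord a) -(card_imset _ inj); apply: subset_leq_card.
by apply/subsetP => _ /imsetP [k _ ->]; rewrite /multiples; apply/imsetP; exists (k%:R).
Qed.

Lemma part_facts (n d e : nat) (I : finType) (f : I -> 'Z_n) (P : {set I})
    (r : 'Z_n) :
  n = (d * e)%N -> coprime d e -> (1 < d)%N -> (1 < e)%N ->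
  f @: P = [set r + x | x in multiples n e] :\ r -> #|P| = d.-1 ->
  [/\ forall x, x \in P -> (f x %% e = r %% e)%N,
      forall x, x \in P -> (f x %% d != r %% d)%N &
      forall x x', x \in P -> x' \in P -> (f x %% d = f x' %% d)%N -> x = x'].
Proof.
move=> nde cde d1 e1 hP cP.
have hn : (1 < n)%N by rewrite nde; nia.
have en : (e %| n)%N by rewrite nde dvdn_mull.
have mem : forall x, x \in P -> f x != r /\ exists y : 'Z_n, f x = r + y *+ e.
  move=> x xP; have : f x \in f @: P by rewrite imset_f.
  rewrite hP in_setD1 => /andP [ne /imsetP [w /imsetP [y _ wy] fxw]].
  by split => //; exists y; rewrite fxw wy.
have re : forall x, x \in P -> (f x %% e = r %% e)%N.
  move=> x /mem [_ [y ->]]; rewrite Ladd // Lmuln // modn_dvdm //.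
  by rewrite -modnDmr modn_dvdm // modnMl addn0.
have uniq : forall a b : 'Z_n, (a %% d = b %% d)%N -> (a %% e = b %% e)%N -> a = b.
  move=> a b h1 h2; apply: val_inj.
  by apply: (crt_uniq cde) => //; rewrite -nde; apply: Lval.
split => //.
- move=> x xP; apply/negP => /eqP h.
  have [ne _] := mem x xP; move: ne; rewrite (uniq _ _ h (re x xP)) eqxx.
  by [].
- have inj : {in P &, injective f}.
    apply/imset_injP; rewrite eqn_leq leq_imset_card /= hP cP.
    have cm := @card_mult n d e nde hn.
    have ct : #|[set r + x | x in multiples n e]| = #|multiples n e|.
      by apply: card_imset; apply: addrI.
    rewrite -ct in cm; move: cm.
    have := cardsD1 r [set r + x | x in multiples n e].
    set K := #|_ :\ r|; set T := #|_|.
    case: (r \in _) => /= h; rewrite -subn1; lia.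
  move=> x x' xP x'P h; apply: inj => //.
  by apply: uniq => //; rewrite !re.
Qed.

Lemma conj_pt {n : nat} (hn : (1 < n)%N) {z : algC} (hz : n.-primitive_root z)
  (a b : 'Z_n) : z ^+ a * (z ^+ b)^* = z ^+ ((a - b)%R : 'Z_n).
Proof.
have e : z ^+ a = z ^+ ((a - b)%R : 'Z_n) * z ^+ b.
  by rewrite -exprD -[RHS](prim_expr_mod hz) -Ladd // subrK.
by rewrite e -mulrA rmorphXn -exprMn (root_conj _ _ hz) expr1n mulr1.
Qed.

Lemma mod_cancel (m x y c : nat) :
  ((x %% m + c) %% m = (y %% m + c) %% m)%N -> (x %% m = y %% m)%N.
Proof. by rewrite !modnDml => /eqP; rewrite eqn_modDr => /eqP. Qed.

Lemma mod_cancel2 (m x y c : nat) :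
  ((c + x %% m) %% m = (c + y %% m) %% m)%N -> (x %% m = y %% m)%N.
Proof. by rewrite !(addnC c); apply: mod_cancel. Qed.

Theorem lemma6p6 (p q : nat) (pp : prime p) (pq : prime q) (neq : p != q)
    (p5 : (5 <= p)%N) (q5 : (5 <= q)%N)
    (z : algC) (hz : (p * q)%N.-primitive_root z)
    (M : 'M['Z_(p * q)]_(p + q)) (hM : hadamard_exp z M) :
  forall i j k : 'I_(p + q), i != j -> j != k -> i != k ->
  forall (P1 Q1 R1 : {set 'I_(p + q)}) (r1 : 'Z_(p * q)),
    is_PQR M i j P1 Q1 R1 r1 ->
  forall (P2 Q2 R2 : {set 'I_(p + q)}) (r2 : 'Z_(p * q)),
    is_PQR M j k P2 Q2 R2 r2 ->
  P1 :&: Q2 = set0.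
Proof.
move=> i j k ij jk ik P1 Q1 R1 r1 H1 P2 Q2 R2 r2 H2.
have hn : (1 < p * q)%N by nia.
have cpq := cop_pq pp pq neq.
have cqp : coprime q p by rewrite coprime_sym.
have p1 : (1 < p)%N by lia.
have q1 : (1 < q)%N by lia.
set f := Ldiff M i j; set g := Ldiff M j k; set h := Ldiff M i k.
have hfg : forall x, h x = f x + g x.
  by move=> x; rewrite /h /f /g /Ldiff [RHS]addrC addrA subrK.
have hs : \sum_x z ^+ (h x : nat) = 0.
  have ki : k != i by rewrite eq_sym.
  rewrite -[RHS](hM k i ki).
  apply: eq_bigr => x _; exact: (esym (conj_pt hn hz _ _)).
have [u2 [v2 [ii iip iiq]]] := @cross p q pp pq neq z hz _ (fun x => nat_of_ord (h x))
   (fun x => Lval hn (h x)) hs (card_ord _).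
case: H1 => _ cov1 [_ hR1] [cP1 hP1] [cQ1 hQ1].
case: H2 => _ cov2 [_ hR2] [cP2 hP2] [cQ2 hQ2].
have [fPq fPp fPinj] := @part_facts (p * q) p q _ f P1 r1 erefl cpq p1 q1 hP1 cP1.
have [fQp fQq fQinj] := @part_facts (p * q) q p _ f Q1 r1 (mulnC p q) cqp q1 p1 hQ1 cQ1.
have [gPq gPp gPinj] := @part_facts (p * q) p q _ g P2 r2 erefl cpq p1 q1 hP2 cP2.
have [gQp gQq gQinj] := @part_facts (p * q) q p _ g Q2 r2 (mulnC p q) cqp q1 p1 hQ2 cQ2.
have fnP : forall x, x \notin P1 -> (f x %% p = r1 %% p)%N.
  move=> x xP; have : x \in P1 :|: Q1 :|: R1 by rewrite cov1 inE.
  rewrite !inE (negbTE xP) orFb => /orP [/fQp //|xR].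
  by have -> : f x = r1 by exact: hR1.
have gnQ : forall x, x \notin Q2 -> (g x %% q = r2 %% q)%N.
  move=> x xQ; have : x \in P2 :|: Q2 :|: R2 by rewrite cov2 inE.
  rewrite !inE (negbTE xQ) orbF => /orP [/gPq //|xR].
  by have -> : g x = r2 by exact: hR2.
have hp : forall x, (h x %% p = (f x + g x) %% p)%N.
  by move=> x; rewrite hfg Ladd // modn_dvdm // dvdn_mulr.
have hq : forall x, (h x %% q = (f x + g x) %% q)%N.
  by move=> x; rewrite hfg Ladd // modn_dvdm // dvdn_mull.
set C := P1 :&: Q2.
have hCp : forall x, x \in C -> (h x %% p = (f x %% p + r2 %% p) %% p)%N.
  by move=> x; rewrite inE => /andP [_ xQ]; rewrite hp -[in LHS]modnDmr (gQp _ xQ) modnDml.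
have hCq : forall x, x \in C -> (h x %% q = (r1 %% q + g x %% q) %% q)%N.
  by move=> x; rewrite inE => /andP [xP _]; rewrite hq -[in LHS]modnDml (fPq _ xP) modnDmr.
have Cle2 : (#|C| <= 2)%N.
  pose C1 := [set x in C | h x %% p == u2]%N.
  pose C2 := [set x in C | h x %% q == v2]%N.
  have sub : C \subset C1 :|: C2.
    apply/subsetP => x; rewrite !inE => ->.
    by case: (ii x) => ->; rewrite eqxx ?orbT.
  have c1 : (#|C1| <= 1)%N.
    apply/card_le1_eqP => x y; rewrite !inE => /andP [xC /eqP hx] /andP [yC /eqP hy].
    have xC' : x \in C by rewrite inE.
    have yC' : y \in C by rewrite inE.
    have := hCp _ xC'; have := hCp _ yC'; rewrite hy -hx => -> /mod_cancel e.
    case/andP: xC => xP _; case/andP: yC => yP _.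
    by apply: fPinj.
  have c2 : (#|C2| <= 1)%N.
    apply/card_le1_eqP => x y; rewrite !inE => /andP [xC /eqP hx] /andP [yC /eqP hy].
    have xC' : x \in C by rewrite inE.
    have yC' : y \in C by rewrite inE.
    have := hCq _ xC'; have := hCq _ yC'; rewrite hy -hx => -> /mod_cancel2 e.
    case/andP: xC => _ xQ; case/andP: yC => _ yQ.
    by apply: gQinj.
  have := subset_leq_card sub; rewrite cardsU; lia.
apply/eqP; apply: contraT => /set0Pn [x0 x0C].
have hE : ((r1 %% p + r2 %% p) %% p = u2)%N.
  apply/eqP; apply: contraT => ne.
  pose E := Q2 :\: P1.
  have hEp : forall x, x \in E -> (h x %% p = (r1 %% p + r2 %% p) %% p)%N.
    move=> x; rewrite inE => /andP [xP xQ].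
    by rewrite hp -modnDm (fnP _ xP) (gQp _ xQ) modnDm.
  have cE : (#|E| <= 1)%N.
    apply/card_le1_eqP => x y xE yE.
    apply: iip; first by rewrite hEp // hEp.
    by rewrite hEp.
  have := cardsID P1 Q2; rewrite setIC -/C cQ2 -subn1 => eQ.
  move: cE; rewrite /E => cE; have := Cle2; lia.
have hF : ((r1 %% q + r2 %% q) %% q = v2)%N.
  apply/eqP; apply: contraT => ne.
  pose F := P1 :\: Q2.
  have hFq : forall x, x \in F -> (h x %% q = (r1 %% q + r2 %% q) %% q)%N.
    move=> x; rewrite inE => /andP [xQ xP].
    by rewrite hq -modnDm (fPq _ xP) (gnQ _ xQ) modnDm.
  have cF : (#|F| <= 1)%N.
    apply/card_le1_eqP => x y xF yF.
    apply: iiq; first by rewrite hFq // hFq.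
    by rewrite hFq.
  have := cardsID Q2 P1; rewrite -/C cP1 -subn1 => eP.
  move: cF; rewrite /F => cF; have := Cle2; lia.
have := x0C; rewrite inE => /andP [x0P x0Q].
case: (ii x0) => e0.
  move: e0; rewrite (hCp _ x0C) -hE => /mod_cancel.
  by move/eqP; rewrite (negbTE (fPp _ x0P)).
move: e0; rewrite (hCq _ x0C) -hF => /mod_cancel2.
by move/eqP; rewrite (negbTE (gQq _ x0Q)).
Qed.
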